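(* Let $\mathsf{R}$ be a commutative ring and $f=\sum_{k=1}^t a_k\mathbf{x}^{\mathbf{e}_k}\in\mathsf{R}[x_1,\ldots,x_n]$ with max degree less than $D$ and at most $T$ nonzero terms. Set $\nu = \max(4n, 8\ln(10T))$, and choose $\nu$ vectors $\mathbf{s}\in\mathbb{Z}^n$, independently, according to a distribution such that for any single such random $\mathbf{s}$ and any particular term of $f$, the probability that the term collides with another term in $f(z^{s_1},\ldots,z^{s_n})$ is less than $1/4$. Then, with probability at least $9/10$, every term of $f$ collides with no other term for at least $2n$ of the substitutions.
   Context: Here $\mathbf{x}^{\mathbf{e}} = x_1^{e_1}\cdots x_n^{e_n}$, the $a_k$ are nonzero and the $\mathbf{e}_k$ pairwise distinct; max degree less than $D$ means every variable occurs with exponent less than $D$. The $i$th term collides in the substitution $\mathbf{s}=(s_1,\ldots,s_n)$ if there is $j\ne i$ with $\mathbf{e}_i\cdot\mathbf{s}=\mathbf{e}_j\cdot\mathbf{s}$. *)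

(* Defs.v *)
From HB Require Import structures.
From mathcomp Require Import all_boot all_order all_algebra.
From mathcomp Require Import all_classical all_reals all_analysis.
Set Implicit Arguments. Unset Strict Implicit. Unset Printing Implicit Defensive.
Import Order.TTheory GRing.Theory Num.Theory.
Local Open Scope ring_scope.

Definition expvec (n : nat) := {ffun 'I_n -> nat}.
Definition subvec (n : nat) := {ffun 'I_n -> int}.

Definition dotes n (e : expvec n) (s : subvec n) : int :=
  \sum_(i < n) (e i)%:Z * s i.

(* The polynomial f = sum_k a_k x^{e_k} is represented by its t terms
   (coefficients a : 'I_t -> R, exponents e : 'I_t -> N^n). *)
Definition collides n t (e : 'I_t -> expvec n) (s : subvec n) (i : 'I_t) : bool :=
  [exists j : 'I_t, (j != i) && (dotes (e i) s == dotes (e j) s)].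

Definition nu (R : realType) (n T : nat) : nat :=
  maxn (4 * n) `|Num.ceil (8 * ln (10 * T%:R : R))|%N.

Definition prob1 (R : realType) n (p : subvec n -> R) (E : set (subvec n)) : \bar R :=
  \esum_(s in E) (p s)%:E.

(* Probability of an event on nu-tuples of independent samples, each
   distributed according to p (iid product distribution). *)
Definition probN (R : realType) n m (p : subvec n -> R)
  (E : set {ffun 'I_m -> subvec n}) : \bar R :=
  \esum_(w in E) (\prod_(j < m) p (w j))%:E.

(* Main.v *)
Require Import Defs.
From HB Require Import structures.
From mathcomp Require Import all_boot all_order all_algebra.
From mathcomp Require Import all_classical all_reals all_analysis.
From mathcomp Require Import zify ring lra.
Import Order.TTheory GRing.Theory Num.Theory.
Local Open Scope classical_set_scope.
Local Open Scope ring_scope.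
Section S.
Variables (R : realType) (X : choiceType).
Local Open Scope ereal_scope.
Lemma esumZl (I : set X) (a : X -> \bar R) (r : R) : (0 <= r)%R ->
  (forall i, I i -> 0 <= a i) ->
  \esum_(i in I) (r%:E * a i) = r%:E * \esum_(i in I) a i.
Proof.
move=> r0 a0; rewrite /esum -ereal_supZl//; last first.
  by apply/set0P; exists 0; exists set0 => //; [exact: fsets_set0|rewrite fsbig_set0].
rewrite image_comp; congr ereal_sup; apply: eq_imagel => A [finA AI] /=.
rewrite !fsbig_finite// [in RHS]big_seq ge0_sume_distrr -?big_seq// => i.
by rewrite in_fset_set// inE => /AI; exact: a0.
Qed.
End S.
Section S2.
Variables (R : realType) (X : choiceType).
Local Open Scope ereal_scope.
Definition econs m (xf : X * {ffun 'I_m -> X}) : {ffun 'I_m.+1 -> X} :=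
  [ffun j => if unlift ord0 j is Some k then xf.2 k else xf.1].

Lemma econs0 m xf : @econs m xf ord0 = xf.1.
Proof. by rewrite ffunE unlift_none. Qed.
Lemma econsS m xf k : @econs m xf (lift ord0 k) = xf.2 k.
Proof. by rewrite ffunE liftK. Qed.

Lemma econs_bij m : set_bij [set: X * {ffun 'I_m -> X}] [set: {ffun 'I_m.+1 -> X}] (@econs m).
Proof.
split=> //.
- move=> [x f] [y h] _ _ E; have := @econs0 m (x, f); rewrite E econs0 /= => ->.
  congr pair; apply/ffunP => k.
  by have := @econsS m (x, f) k; rewrite E econsS /= => ->.
- move=> w _; exists (w ord0, [ffun k => w (lift ord0 k)]) => //.
  apply/ffunP => j; rewrite ffunE; case: (unliftP ord0 j) => [k ->|->] /=.
    by rewrite ffunE.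
  by [].
Qed.

Lemma esum_prod (g : X -> R) s : (forall x, (0 <= g x)%R) ->
  \esum_(x in [set: X]) (g x)%:E = s%:E -> forall m,
  \esum_(w in [set: {ffun 'I_m -> X}]) (\prod_(j < m) g (w j))%:E = (s ^+ m)%:E.
Proof.
move=> g0 gs; elim=> [|m IH].
  rewrite (_ : [set: {ffun 'I_0 -> X}] = [set ffun0 (card_ord 0)]); last first.
    apply/seteqP; split=> w //= _; apply/ffunP => -[] //.
  by rewrite esum_set1 big_ord0 ?expr0// lee_fin.
rewrite (reindex_esum _ _ _ _ (econs_bij m)).
rewrite (_ : [set: X * {ffun 'I_m -> X}] = [set: X] `*`` (fun=> [set: {ffun 'I_m -> X}])); last first.
  by apply/seteqP; split.
rewrite (eq_esum (b := fun k => (\prod_(j < m.+1) g (econs m (k.1, k.2) j))%:E)); last by move=> -[].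
rewrite -(esum_esum (a := fun x f => (\prod_(j < m.+1) g (econs m (x, f) j))%:E)); last first.
  by move=> x f _ _; rewrite lee_fin; apply: prodr_ge0 => j _.
have inner x : \esum_(f in [set: {ffun 'I_m -> X}]) (\prod_(j < m.+1) g (econs m (x, f) j))%:E
    = ((s ^+ m) * g x)%:E.
  transitivity (\esum_(f in [set: {ffun 'I_m -> X}]) ((g x)%:E * (\prod_(j < m) g (f j))%:E)).
    apply: eq_esum => f _; rewrite big_ord_recl econs0 -EFinM; congr (_ * _)%:E.
    by apply: eq_bigr => j _; rewrite econsS.
  rewrite (@esumZl _ _ setT (fun f : {ffun _ -> X} => (\prod_(j < m) g (f j))%:E) _)//; last by move=> f _; rewrite lee_fin; apply: prodr_ge0.
  by rewrite IH -EFinM mulrC.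
rewrite (eq_esum (b := fun x => ((s ^+ m)%:E * (g x)%:E))); last by move=> x _; rewrite inner EFinM.
rewrite (@esumZl _ _ setT (fun x => (g x)%:E) _)// ?gs; last by move=> x _; rewrite lee_fin.
rewrite -EFinM exprS mulrC//.
by apply: exprn_ge0; rewrite -lee_fin -gs esum_ge0// => x _; rewrite lee_fin.
Qed.
End S2.

Lemma numeric (R : realType) (n T t : nat) : (t <= T)%N ->
  t%:R * (7/4 : R) ^+ (nu R n T) / 4 ^+ (nu R n T - 2 * n) <= 1/10.
Proof.
move=> tT; set m := nu R n T.
have m4 : (4 * n <= m)%N by rewrite /m /nu leq_maxl.
have mc : (`|Num.ceil (8 * ln (10 * T%:R : R))|%N <= m)%N by rewrite /m /nu leq_maxr.
clearbody m.
have h24 : (2 : R) ^+ m <= 4 ^+ (m - 2 * n).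
  have -> : (4 : R) = 2 ^+ 2 by rewrite expr2 -natrM.
  rewrite -exprM ler_eXn2l ?ltr1n //; lia.
have t0 : 0 <= t%:R :> R by [].
have step1 : t%:R * (7/4 : R) ^+ m / 4 ^+ (m - 2 * n) <= t%:R * (7/8) ^+ m.
  rewrite -mulrA ler_wpM2l // ler_pdivrMr ?exprn_gt0 //.
  apply: (le_trans (y := (7/8 : R) ^+ m * 2 ^+ m)).
    by rewrite -exprMn (_ : (7/8 : R) * 2 = 7/4) //; field.
  by rewrite ler_wpM2l // exprn_ge0.
apply: (le_trans step1).
case: (posnP T) => [T0|Tpos].
  by move: tT; rewrite T0 leqn0 => /eqP ->; rewrite mul0r; lra.
have TR : (1 <= T%:R :> R) by rewrite ler1n.
pose L := 8 * ln (10 * T%:R : R).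
have L0 : 0 <= L.
  rewrite /L mulr_ge0 // -ln1 ler_ln ?posrE //; lra.
have mL : L <= m%:R.
  move: mc; rewrite -/L.
  rewrite -(ler_nat R) natr_absz ger0_norm; last by rewrite ceil_ge0; lra.
  by apply: le_trans; exact: ceil_ge.
have h78 : (7/8 : R) ^+ m <= expR (- (m%:R / 8)).
  rewrite (_ : - (m%:R / 8) = m%:R * (- (1/8))) ?expRM_natl; last by lra.
  have e0 := expR_ge0 (- (1/8) : R).
  have e1 := expR_ge1Dx (- (1/8) : R).
  apply: lerXn2r; rewrite ?nnegrE; lra.
have hexp : expR (- (m%:R / 8)) <= (10 * T%:R)^-1 :> R.
  rewrite -[X in _ <= X^-1](@lnK R) ?posrE; last by lra.
  by rewrite -expRN ler_expR; move: mL; rewrite /L; lra.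
have : t%:R * (7/8 : R) ^+ m <= t%:R * (10 * T%:R)^-1.
  by rewrite ler_wpM2l //; exact: le_trans hexp.
move/le_trans; apply.
have tTR : t%:R <= T%:R :> R by rewrite ler_nat.
rewrite ler_pdivrMr; last by lra.
lra.
Qed.

Lemma final (R : realType) (gv nv : \bar R) (r : R) :
  1%:E = (gv + nv)%E -> (nv <= r%:E)%E -> r <= 1/10 -> (0 <= nv)%E -> (0 <= gv)%E ->
  ((9/10 : R)%:E <= gv)%E.
Proof.
case: gv => [g| |]; last by move=> _ _ _ _; rewrite leNgt ltNy0.
  2: by move=> *; rewrite leey.
case: nv => [v| |] /=.
- rewrite !lee_fin => -[E] vr r10 v0 g0; lra.
- by move=> _; rewrite leNgt ltry.
- by move=> _ _ _; rewrite leNgt ltNy0.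
Qed.

Theorem lemma5p1 (Rg : comNzRingType) (R : realType) (n D T t : nat)
  (a : 'I_t -> Rg) (e : 'I_t -> expvec n)
  (ha : forall k, a k != 0)
  (he : injective e)
  (hD : forall k i, (e k i < D)%N)
  (hT : (t <= T)%N)
  (p : subvec n -> R)
  (hp0 : forall s, 0 <= p s)
  (hp1 : prob1 p setT = 1%E)
  (hcol : forall i : 'I_t,
     (prob1 p [set s | collides e s i] < (1 / 4 : R)%:E)%E) :
  ((9 / 10 : R)%:E <=
     probN p [set w : {ffun 'I_(nu R n T) -> subvec n} |
                forall i : 'I_t,
                  (2 * n <= #|[pred j : 'I_(nu R n T) | ~~ collides e (w j) i]|)%N])%E.
Proof.
have hnum := @numeric R n T t hT.
move: hnum; set m := nu R n T => hnum.
pose P (w : {ffun 'I_m -> subvec n}) := \prod_(j < m) p (w j).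
have P0 w : 0 <= P w by apply: prodr_ge0.
have tot : (\esum_(w in [set: {ffun 'I_m -> subvec n}]) (P w)%:E = 1%:E)%E.
  by rewrite (@esum_prod _ _ p 1 hp0 hp1 m) expr1n.
pose q i := fine (prob1 p [set s | collides e s i]).
have q0 i : (prob1 p [set s | collides e s i] = (q i)%:E)%E.
  rewrite /q fineK // ge0_fin_numE; first exact: lt_trans (hcol i) (ltry _).
  by apply: esum_ge0 => x _; rewrite lee_fin.
have q14 i : q i < 1/4 by rewrite -lte_fin -q0.
have qge0 i : 0 <= q i by rewrite -lee_fin -q0; apply: esum_ge0 => x _; rewrite lee_fin.
pose g i x := p x * 4 ^+ (collides e x i : nat).
have g0 i x : 0 <= g i x by rewrite mulr_ge0 // exprn_ge0.
have gs i : (\esum_(x in [set: subvec n]) (g i x)%:E = (1 + 3 * q i)%:E)%E.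
  transitivity (\esum_(x in [set: subvec n]) ((p x)%:E + 3%:E *
     (if x \in [set s | collides e s i] then (p x)%:E else 0%E)))%E.
    apply: eq_esum => x _; rewrite /g.
    case H: (collides e x i).
      rewrite mem_set //= expr1 -EFinM -EFinD; congr (_%:E); ring.
    by rewrite memNset /= ?H // expr0 mulr1 mule0 adde0.
  rewrite esumD //; last first.
    by move=> x _; rewrite mule_ge0 // ?lee_fin //; case: ifP; rewrite ?lee_fin.
    by move=> x _; rewrite lee_fin.
  rewrite (@esumZl _ _ setT (fun x => if x \in [set s | collides e s i] then (p x)%:E else 0%E) 3); last first.
    by move=> x _; case: ifP; rewrite ?lee_fin.
    by [].
  rewrite -esum_mkcond.
  have -> : (\esum_(x in [set: subvec n]) (p x)%:E = 1%:E)%E by exact: hp1.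
  by move: (q0 i); rewrite /prob1 => ->.
pose S i (w : {ffun 'I_m -> subvec n}) := #|[pred j : 'I_m | collides e (w j) i]|.
have prodg i (w : {ffun 'I_m -> subvec n}) : \prod_(j < m) g i (w j) = P w * 4 ^+ S i w.
  rewrite /g big_split /= prodrXr; congr (_ * 4 ^+ _).
  rewrite /S -sum1_card [RHS]big_mkcond /=; apply: eq_bigr => j _.
  by rewrite inE; case: (collides e (w j) i).
have Eg i : (\esum_(w in [set: {ffun 'I_m -> subvec n}]) (P w * 4 ^+ S i w)%:E
              = ((1 + 3 * q i) ^+ m)%:E)%E.
  rewrite -(@esum_prod _ _ (g i) (1 + 3 * q i) (g0 i) (gs i) m).
  by apply: eq_esum => w _; rewrite prodg.
set G := [set w : {ffun 'I_m -> subvec n} | _].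
pose k := (m - 2 * n)%N.
pose F i (w : {ffun 'I_m -> subvec n}) := (4 ^+ k)^-1 * (P w * 4 ^+ S i w).
have F0 i w : 0 <= F i w by rewrite mulr_ge0 ?invr_ge0 ?exprn_ge0 // mulr_ge0 // exprn_ge0.
have ptw w : ~ G w -> P w <= \sum_(i < t) F i w.
  move=> nG.
  have : ~~ [forall i, (2 * n <= #|[pred j : 'I_m | ~~ collides e (w j) i]|)%N].
    by apply/negP => /forallP H; apply: nG => i; exact: H.
  rewrite negb_forall => /existsP [i0]; rewrite -ltnNge => bad.
  rewrite (bigD1 i0) //= -[P w]addr0 lerD //; last by apply: sumr_ge0 => i _.
  have hS : (k <= S i0 w)%N.
    have hc : (S i0 w + #|[pred j : 'I_m | ~~ collides e (w j) i0]| = m)%N.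
      rewrite /S -[RHS](card_ord m) -(cardC [pred j : 'I_m | collides e (w j) i0]).
      by congr addn; apply: eq_card => j; rewrite !inE.
    move: bad hc; rewrite /k; lia.
  rewrite /F mulrC ler_pdivlMr ?exprn_gt0 // ler_wpM2l //.
  by rewrite ler_eXn2l ?ltr1n.
have Nle : (\esum_(w in [set: {ffun 'I_m -> subvec n}] `&` ~` G) (P w)%:E
             <= (\sum_(i < t) (4 ^+ k)^-1 * (1 + 3 * q i) ^+ m)%:E)%E.
  rewrite esum_mkcondl.
  apply: (le_trans (y := \esum_(w in ~` G) (\sum_(i < t) (F i w)%:E))%E).
    apply: le_esum => w nG; rewrite in_setT.
    by rewrite sumEFin lee_fin; apply: ptw.
  apply: (le_trans (y := \esum_(w in [set: {ffun 'I_m -> subvec n}]) (\sum_(i < t) (F i w)%:E))%E).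
    rewrite [leLHS]esum_mkcond; apply: le_esum => w _.
    case: ifP => _; first by [].
    by apply: sume_ge0 => i _; rewrite lee_fin.
  rewrite esum_sum; last by move=> w i _ _; rewrite lee_fin.
  rewrite -sumEFin; apply: lee_sum => i _.
  rewrite (eq_esum (b := fun w => ((4 ^+ k)^-1%:E * (P w * 4 ^+ S i w)%:E)%E)); last first.
    by move=> w _; rewrite /F EFinM.
  rewrite (@esumZl _ _ setT (fun w : {ffun 'I_m -> subvec n} => (P w * 4 ^+ S i w)%:E)); last first.
    by move=> w _; rewrite lee_fin mulr_ge0 // exprn_ge0.
    by rewrite invr_ge0 exprn_ge0.
  by rewrite Eg -EFinM.
have sumle : \sum_(i < t) (4 ^+ k)^-1 * (1 + 3 * q i) ^+ m <= 1/10.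
  apply: le_trans hnum.
  apply: (le_trans (y := \sum_(i < t) (4 ^+ k)^-1 * (7/4 : R) ^+ m)).
    apply: ler_sum => i _; rewrite ler_wpM2l ?invr_ge0 ?exprn_ge0 //.
    apply: lerXn2r; rewrite ?nnegrE; have := q14 i; have := qge0 i; lra.
  rewrite sumr_const card_ord /k le_eqVlt; apply/orP; left; apply/eqP.
  by rewrite -[LHS]mulr_natl mulrA mulrAC.
have -> : probN p G = (\esum_(w in G) (P w)%:E)%E by [].
have E := esumID G [set: {ffun 'I_m -> subvec n}] (fun w => (P w)%:E)
   (fun w _ => (P0 w : (0 <= (P w)%:E)%E)).
rewrite tot !setTI in E.
have Nge0 : (0 <= \esum_(w in [set: {ffun 'I_m -> subvec n}] `&` ~` G) (P w)%:E)%E.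
  by apply: esum_ge0 => w _; rewrite lee_fin.
have Gge0 : (0 <= \esum_(w in G) (P w)%:E)%E by apply: esum_ge0 => w _; rewrite lee_fin.
rewrite setTI in Nle Nge0.
exact: (@final R _ _ _ E Nle sumle Nge0 Gge0).
Qed.
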